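(* Let $R$ be a finitely generated unital $K$-algebra with filtration $\mathcal{F}=\{V_i\}_{i\ge1}$, let $e\in R$ be a full idempotent and $S:=eRe$. Then, with respect to the filtration $\mathcal{G}=\{eV_ie\}_{i\ge1}$ of $S$, one has $\mathrm{h}_{\mathrm{alg}}(S,\mathcal{G})\le\mathrm{h}_{\mathrm{alg}}(R,\mathcal{F})$.
   Context: An idempotent $e$ of $R$ is full if $ReR=R$. A filtration of $R$ is an increasing family of subspaces $V_i$ with union $R$ and $V_iV_j\subseteq V_{i+j}$, with finite-dimensional quotients $V_i/V_{i-1}$. $\mathrm{h}_{\mathrm{alg}}(R,\mathcal{F})=0$ if $R$ is finite-dimensional and otherwise $\limsup_n\frac1n\log\dim(V_n/V_{n-1})$. *)

(* Defs.v *)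
From HB Require Import structures.
From mathcomp Require Import all_boot all_order all_algebra.
From mathcomp Require Import boolp classical_sets reals ereal sequences exp.
Set Implicit Arguments. Unset Strict Implicit. Unset Printing Implicit Defensive.
Import Order.TTheory GRing.Theory Num.Theory.
Local Open Scope ring_scope.
Local Open Scope classical_set_scope.

Section Defs.
Variables (K : fieldType) (A : algType K).

Definition span_set (s : seq A) : set A :=
  [set x | exists c : 'I_(size s) -> K, x = \sum_(i < size s) c i *: s`_i].

Definition is_subspace (W : set A) : Prop :=
  W 0 /\ (forall x y, W x -> W y -> W (x + y)) /\ (forall (k : K) x, W x -> W (k *: x)).

Definition set_add (U W : set A) : set A := [set u + w | u in U & w in W].

(* the quotient W/U (U a subspace of W) is finite-dimensional, of dimension <= d:
   W is covered by U + span of d elements of W *)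
Definition qspan_le (W U : set A) (d : nat) : Prop :=
  exists s : seq A, size s = d /\ (forall x, x \in s -> W x) /\
    W `<=` set_add U (span_set s).

Definition qfinite (W U : set A) : Prop := exists d, qspan_le W U d.

(* dim (W/U) : least d with W/U spanned by d vectors (0 if infinite-dim) *)
Lemma qfinite_ex (W U : set A) :
  qfinite W U -> exists d, `[< qspan_le W U d >].
Proof. by move=> [d hd]; exists d; apply/asboolP. Qed.

Definition qdim (W U : set A) : nat :=
  match pselect (qfinite W U) with
  | left h => ex_minn (qfinite_ex h)
  | right _ => 0
  end.

Definition fin_dim (C : set A) : Prop := exists s : seq A, C `<=` span_set s /\ (forall x, x \in s -> C x).

Definition fin_gen_alg : Prop :=
  exists s : seq A, forall P : set A,
    P 1 -> (forall x, x \in s -> P x) ->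
    (forall x y, P x -> P y -> P (x + y)) -> (forall x y, P x -> P y -> P (x * y)) ->
    (forall (k : K) x, P x -> P (k *: x)) -> P = setT.

(* filtration {V_i}_{i>=1} of A, indexed by nat with V 0 unused; V_0 := 0 *)
Definition prevV (V : nat -> set A) (n : nat) : set A :=
  if n is n'.+2 then V n'.+1 else [set 0].

Definition is_filtration (V : nat -> set A) : Prop :=
  (forall i, (0 < i)%N -> is_subspace (V i)) /\
  (forall i, (0 < i)%N -> V i `<=` V i.+1) /\
  (forall x, exists i, (0 < i)%N /\ V i x) /\
  (forall i j x y, (0 < i)%N -> (0 < j)%N -> V i x -> V j y -> V (i + j)%N (x * y)) /\
  (forall i, (0 < i)%N -> qfinite (V i) (prevV V i)).

Definition two_sided (e : A) : set A :=
  [set x | exists (n : nat) (a b : 'I_n -> A), x = \sum_(k < n) a k * e * b k].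

Definition full_idempotent (e : A) : Prop := e * e = e /\ two_sided e = setT.

Definition corner (e : A) (C : set A) : set A := [set e * x * e | x in C].

(* algebraic entropy of a filtration V of an algebra whose underlying K-space is C:
   0 if C is finite dimensional, else limsup_n (1/n) log dim(V_n/V_{n-1})
   (with log 0 := -oo) *)
Definition h_alg (RR : realType) (C : set A) (V : nat -> set A) : \bar RR :=
  if `[< fin_dim C >] then 0%E
  else limn_esup (fun n : nat =>
         let d := qdim (V n) (prevV V n) in
         if d == 0%N then -oo%E else ((ln (d%:R : RR)) / n%:R)%:E).

End Defs.

(* Main.v *)
Require Import Defs.
From HB Require Import structures.
From mathcomp Require Import all_boot all_order all_algebra.
From mathcomp Require Import boolp classical_sets reals ereal sequences exp.
Import Order.TTheory GRing.Theory Num.Theory.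
Local Open Scope ring_scope.
Local Open Scope classical_set_scope.

Section LS.
Variable RR : realType.
Definition fD (D : nat -> nat) : (\bar RR)^nat := fun n =>
  if D n == 0%N then -oo%E else ((ln ((D n)%:R : RR)) / n%:R)%:E.

Lemma limn_esupE (u : (\bar RR)^nat) : limn_esup u = ereal_inf (range (esups u)).
Proof. by rewrite limn_esup_lim; apply: cvg_lim => //; exact: cvg_esups_inf. Qed.

Lemma fD_le D D' n : (0 < n)%N -> (D' n <= D n)%N -> (fD D' n <= fD D n)%E.
Proof.
move=> n0 le; rewrite /fD; case: eqP => [_|/eqP D'0]; first exact: leNye.
have D0 : D n != 0%N by apply: contra D'0 => /eqP h; rewrite -leqn0 -h.
rewrite (negbTE D0) lee_fin ler_wpM2r // ?invr_ge0 ?ler0n //.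
rewrite ler_ln ?ler_nat // posrE ltr0n lt0n //.
Qed.

Lemma limsup_mono D D' : (forall n, (0 < n)%N -> (D' n <= D n)%N) ->
  (limn_esup (fD D') <= limn_esup (fD D))%E.
Proof.
move=> h; rewrite !limn_esupE; apply: le_ereal_inf_tmp => _ [N _ <-].
apply: (@le_trans _ _ (esups (fD D') N.+1)); first by apply: ereal_inf_lbound; exists N.+1.
apply: (@le_trans _ _ (esups (fD D) N.+1)); last exact: nonincreasing_esups.
rewrite /esups /=; apply: ge_ereal_sup => _ [k /= Nk <-].
apply: (@le_trans _ _ (fD D k)); have k0 : (0 < k)%N by case: k Nk.
  by apply: fD_le => //; apply: h.
by apply: ereal_sup_ubound; exists k.
Qed.

Lemma limsup_ge0 D : (forall N, exists n, (N <= n)%N /\ D n != 0%N) ->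
  (0 <= limn_esup (fD D))%E.
Proof.
move=> h; rewrite limn_esupE; apply: le_ereal_inf_tmp => _ [N _ <-].
have [n [Nn Dn]] := h N.
apply: (@le_trans _ _ (fD D n)); last by apply: ereal_sup_ubound; exists n.
rewrite /fD (negbTE Dn) lee_fin mulr_ge0 ?invr_ge0 ?ler0n // ln_ge0 // ler1n lt0n //.
Qed.
End LS.
Section Alg.
Context {K : fieldType} {R : algType K}.
Implicit Types (s t : seq R) (x y : R).

Lemma spanP s x : span_set s x <-> exists c : nat -> K, x = \sum_(i < size s) c i *: s`_i.
Proof.
split.
  move=> [c ->]; exists (fun k => if insub k is Some i then c i else 0).
  by apply: eq_bigr => i _; rewrite valK.
by move=> [c ->]; exists (fun i => c i).
Qed.

Lemma span_cat s t x y : span_set s x -> span_set t y -> span_set (s ++ t) (x + y).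
Proof.
move=> /spanP[c ->] /spanP[d ->]; apply/spanP.
exists (fun k => if (k < size s)%N then c k else d (k - size s)%N).
rewrite -(big_mkord xpredT (fun i => (if (i < size s)%N then c i else d (i - size s)%N) *: (s ++ t)`_i)) size_cat.
rewrite (@big_cat_nat _ _ _ (size s)) ?leq_addr //=.
congr (_ + _).
  rewrite big_mkord; apply: eq_bigr => i _.
  by rewrite ltn_ord nth_cat ltn_ord.
rewrite -{1}(add0n (size s)) big_addn addKn big_mkord; apply: eq_bigr => i _.
by rewrite ltnNge leq_addl /= addnK nth_cat ltnNge leq_addl /= addnK.
Qed.

Lemma span_nil x : span_set [::] x -> x = 0.
Proof. by move=> [c ->]; rewrite big_ord0. Qed.

Lemma span_corner (e : R) s x : span_set s x ->
  span_set (map (fun y => e * y * e) s) (e * x * e).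
Proof.
move=> /spanP[c ->]; apply/spanP; exists c; rewrite size_map.
rewrite mulr_sumr mulr_suml; apply: eq_bigr => i _.
by rewrite (nth_map 0) // -scalerAr -scalerAl.
Qed.

Lemma qdim_spec (W U : set R) : qfinite W U ->
  qspan_le W U (qdim W U) /\ (forall d, qspan_le W U d -> (qdim W U <= d)%N).
Proof.
move=> h; rewrite /qdim; case: pselect => // h'.
case: ex_minnP => m /asboolP hm hmin; split => // d hd.
by apply: hmin; apply/asboolP.
Qed.


Context {V : nat -> set R}.
Hypothesis hV : is_filtration V.

Lemma Vmono i j : (0 < i)%N -> (i <= j)%N -> V i `<=` V j.
Proof.
move=> i0; elim: j => [|j IH]; first by rewrite leqn0 => /eqP ->.
rewrite leq_eqVlt => /orP[/eqP -> //|ij].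
have j0 : (0 < j)%N by apply: leq_trans i0 ij.
move=> x /(IH ij) hx; exact: (hV.2.1 j j0).
Qed.

Lemma Vfin n : (0 < n)%N -> exists t, V n `<=` span_set t.
Proof.
elim: n => // n IH _.
have [d [s [_ [_ hs]]]] := hV.2.2.2.2 n.+1 isT.
case: n IH hs => [|n] IH hs.
  exists s => x /hs [u hu [w hw <-]]; by rewrite /= in hu; rewrite hu add0r.
have [t ht] := IH isT; exists (t ++ s) => x /hs [u hu [w hw <-]].
exact: span_cat (ht _ hu) hw.
Qed.
End Alg.

Theorem proposition4p10 (RR : realType) (K : fieldType) (R : algType K)
  (V : nat -> set R) (e : R) :
  fin_gen_alg R -> is_filtration V -> full_idempotent e ->
  (h_alg RR (corner e setT) (fun i => corner e (V i)) <= h_alg RR setT V)%E.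
Proof.
move=> _ hV _.
set G := fun i => corner e (V i).
set D := fun n => qdim (V n) (prevV V n).
set D' := fun n => qdim (G n) (prevV G n).
have eR : h_alg RR setT V = if `[< fin_dim (@setT R) >] then 0%E else limn_esup (fD RR D) by reflexivity.
have eS : h_alg RR (corner e setT) G = if `[< fin_dim (corner e (@setT R)) >] then 0%E else limn_esup (fD RR D') by reflexivity.
rewrite eR eS.
have [finR|nfinR] := asboolP (fin_dim (@setT R)).
  have -> : `[< fin_dim (corner e setT) >] = true.
    apply/asboolP; case: finR => s [hs _]; exists (map (fun y => e * y * e) s); split.
      by move=> _ [y _ <-]; apply: span_corner; exact: hs.
    by move=> x /mapP [y _ ->]; exists y.
  by [].
case: asboolP => [finS|nfinS].
  apply: limsup_ge0 => N; apply: contrapT => hn.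
  have D0 n : (N <= n)%N -> D n = 0%N.
    move=> Nn; apply/eqP; apply: contrapT => h; apply: hn; exists n; split => //; exact/negP.
  have claim n : (N.+1 <= n)%N -> V n `<=` V N.+1.
    elim: n => // n IH; rewrite leq_eqVlt => /orP[/eqP -> //|Mn].
    have [hq _] := qdim_spec _ _ (hV.2.2.2.2 n.+1 isT).
    move: hq; rewrite -/(D n.+1) D0; last by apply: leq_trans (leqnSn _) (ltnW Mn).
    move=> [s [/size0nil s0 [_ hs]]].
    case: n IH Mn hs => // n IH Mn hs.
    move=> x /hs [u hu [w hw <-]]; rewrite s0 in hw; rewrite (span_nil _ hw) addr0.
    exact: IH.
  have [t ht] := Vfin hV _ (ltn0Sn N).
  apply: nfinR; exists t; split => // x _.
  have [i [i0 hi]] := hV.2.2.1 x.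
  apply: ht; apply: (claim (maxn i N.+1)); first by rewrite leq_maxr.
  by apply: (Vmono hV _ _ i0 (leq_maxl _ _)).
apply: limsup_mono => n n0.
have hq := hV.2.2.2.2 n n0.
have [[s [ss [sin hs]]] _] := qdim_spec _ _ hq.
have hq' : qspan_le (G n) (prevV G n) (D n).
  exists (map (fun y => e * y * e) s); split; first by rewrite size_map.
  split; first by move=> x /mapP [y /sin hy ->]; exists y.
  move=> _ [y /hs [u hu [w hw <-]] <-].
  exists (e * u * e); last first.
    exists (e * w * e); first exact: span_corner.
    by rewrite mulrDr mulrDl.
  case: n n0 hq ss sin hs hu => [|[|n]] // _ _ _ _ _ hu.
    by rewrite /= in hu; rewrite hu mulr0 mul0r.
  by exists u.
exact: (qdim_spec _ _ (ex_intro _ _ hq')).2.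
Qed.
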